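(* Let $Z$ be an $n\times n$ matrix of i.i.d. standard normal entries. There is a universal constant $C>0$ such that $$\mathrm{Var}(\mathrm{TV}(Z)) \leq C\,n(n-1).$$
   Context: $\mathrm{TV}(\theta) = \sum_{(u,v)\in E_n}|\theta_u-\theta_v|$, where $E_n$ is the edge set of the $n\times n$ grid graph on $[n]\times[n]$ (pairs of vertices at $\ell_1$-distance 1). *)

(* Defs.v *)
From HB Require Import structures.
From mathcomp Require Import all_boot all_order all_algebra.
From mathcomp Require Import all_classical all_reals all_analysis.
Set Implicit Arguments. Unset Strict Implicit. Unset Printing Implicit Defensive.
Import Order.TTheory GRing.Theory Num.Theory.
Local Open Scope ring_scope.
Local Open Scope classical_set_scope.

Definition grid_vertex (n : nat) := ('I_n * 'I_n)%type.

Definition grid_adj (n : nat) (u v : grid_vertex n) : bool :=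
  (`|(u.1 : nat) - (v.1 : nat)| + `|(u.2 : nat) - (v.2 : nat)|)%N == 1%N.

(* lexicographic strict order, used to pick each unordered edge {u,v} once *)
Definition grid_lt (n : nat) (u v : grid_vertex n) : bool :=
  ((u.1 : nat) < v.1)%N || (((u.1 : nat) == v.1) && ((u.2 : nat) < v.2)%N).

Definition TV {R : numDomainType} (n : nat) (theta : grid_vertex n -> R) : R :=
  \sum_(u : grid_vertex n) \sum_(v : grid_vertex n | grid_adj u v && grid_lt u v)
     `|theta u - theta v|.

(* Mutual independence of a finite family of real random variables:
   product rule for every choice of measurable sets (taking A i = setT
   recovers the product rule for every subfamily). *)
Definition mutually_independent {d} {T : measurableType d} {R : realType}
  (P : probability T R) (I : finType) (X : I -> T -> R) : Prop :=
  forall A : I -> set R, (forall i, measurable (A i)) ->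
    P (\bigcap_(i in [set: I]) (X i @^-1` A i)) =
    (\prod_(i : I) P (X i @^-1` A i))%E.

Definition std_normal_rv {d} {T : measurableType d} {R : realType}
  (P : probability T R) (X : T -> R) : Prop :=
  forall A : set R, measurable A -> P (X @^-1` A) = normal_prob 0 1 A.

(* Main.v *)
Require Import Defs.
From HB Require Import structures.
From mathcomp Require Import all_boot all_order all_algebra.
From mathcomp Require Import all_classical all_reals all_analysis.
From mathcomp Require Import measurable_realfun zify ring lra.
Import Order.TTheory GRing.Theory Num.Theory.
Set Implicit Arguments. Unset Strict Implicit. Unset Printing Implicit Defensive.
Definition gedge n (p : (grid_vertex n * grid_vertex n)%type) : bool :=
  grid_adj p.1 p.2 && grid_lt p.1 p.2.
Definition gshare n (k l : (grid_vertex n * grid_vertex n)%type) : bool :=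
  [|| k.1 == l.1, k.1 == l.2, k.2 == l.1 | k.2 == l.2].

Lemma grid_adj_sym n (u v : grid_vertex n) : grid_adj u v = grid_adj v u.
Proof. by rewrite /grid_adj distnC [X in (_ + X)%N]distnC. Qed.

Lemma sum_bool_card (I : finType) (b : pred I) :
  (\sum_(i : I) (b i : nat) = #|[set i | b i]|)%N.
Proof.
rewrite -sum1dep_card [RHS]big_mkcond /=; apply: eq_bigr => i _.
by case: (b i).
Qed.

Local Open Scope ring_scope.
Lemma distE (a b : nat) : (`|(a : nat) - (b : nat)|)%N = if (a <= b)%N then (b - a)%N else (a - b)%N.
Proof. by case: leqP => h; [rewrite distnEr | rewrite distnEl // ltnW]. Qed.

Local Close Scope ring_scope.
Lemma deg_le4 n (z : grid_vertex n) :
  (\sum_(v : grid_vertex n) (grid_adj z v : nat) <= 4)%N.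
Proof.
rewrite sum_bool_card cardE.
pose f (v : grid_vertex n) := (val v.1, val v.2).
have finj : injective f.
  move=> [a b] [c e]; rewrite /f /= => -[/val_inj -> /val_inj ->] //.
rewrite -(size_map f).
pose z1 := val z.1; pose z2 := val z.2.
apply: (@uniq_leq_size _ _ [:: (z1.-1, z2); (z1.+1, z2); (z1, z2.-1); (z1, z2.+1)]).
  by rewrite (map_inj_uniq finj) enum_uniq.
move=> p /mapP [v]; rewrite mem_enum inE /grid_adj => /eqP H ->.
rewrite /f /z1 /z2 !inE; clear f finj z1 z2.
move: H; case: v => [[a ?] [b ?]]; case: z => [[c ?] [e ?]] /= H.
rewrite !xpair_eqE.
have : (((a == c.-1) && (b == e)) || ((a == c.+1) && (b == e))) ||
       (((a == c) && (b == e.-1)) || ((a == c) && (b == e.+1))).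
  move: H; rewrite !distE; case: (leqP c a) => ?; case: (leqP e b) => ? /= H; lia.
by rewrite !orbA.
Qed.

Lemma pair_sum (I J : finType) (F : I * J -> nat) :
  (\sum_(p : I * J) F p = \sum_(a : I) \sum_(b : J) F (a, b))%N.
Proof. by rewrite pair_big; apply: eq_big => // -[]. Qed.

Lemma sum_edge_fst n (z : grid_vertex n) :
  (\sum_(l | gedge l) (z == l.1 : nat) <= 4)%N.
Proof.
apply: (@leq_trans (\sum_(l : (grid_vertex n * grid_vertex n)%type)
    ((grid_adj l.1 l.2) && (z == l.1) : nat))).
  rewrite [X in (X <= _)%N]big_mkcond /=; apply: leq_sum => l _.
  by rewrite /gedge; case: (grid_adj _ _); case: (grid_lt _ _); case: (z == _).
rewrite pair_sum (bigD1 z) //= [X in (_ + X)%N]big1 ?addn0.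
  under eq_bigr do rewrite eqxx andbT. exact: deg_le4.
by move=> a /negPf az; apply: big1 => b _ /=; rewrite eq_sym az andbF.
Qed.

Lemma sum_edge_snd n (z : grid_vertex n) :
  (\sum_(l | gedge l) (z == l.2 : nat) <= 4)%N.
Proof.
apply: (@leq_trans (\sum_(l : (grid_vertex n * grid_vertex n)%type)
    ((grid_adj l.1 l.2) && (z == l.2) : nat))).
  rewrite [X in (X <= _)%N]big_mkcond /=; apply: leq_sum => l _.
  by rewrite /gedge; case: (grid_adj _ _); case: (grid_lt _ _); case: (z == _).
rewrite pair_sum exchange_big (bigD1 z) //= [X in (_ + X)%N]big1 ?addn0.
  under eq_bigr do rewrite eqxx andbT grid_adj_sym. exact: deg_le4.
by move=> a /negPf az; apply: big1 => b _ /=; rewrite eq_sym az andbF.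
Qed.

Lemma share_le16 n (k : (grid_vertex n * grid_vertex n)%type) :
  (\sum_(l | gedge l) (gshare k l : nat) <= 16)%N.
Proof.
apply: (@leq_trans (\sum_(l | gedge l) ((k.1 == l.1 : nat) + (k.1 == l.2 : nat)
   + (k.2 == l.1 : nat) + (k.2 == l.2 : nat)))).
  apply: leq_sum => l _; rewrite /gshare.
  by case: (k.1 == l.1); case: (k.1 == l.2); case: (k.2 == l.1); case: (k.2 == l.2).
rewrite !big_split /=.
rewrite -[16]/(4+4+4+4); repeat apply: leq_add;
  [exact: sum_edge_fst|exact: sum_edge_snd|exact: sum_edge_fst|exact: sum_edge_snd].
Qed.

Lemma edges_le n : (\sum_(k : grid_vertex n * grid_vertex n | gedge k) 1 <= 4 * (n * n))%N.
Proof.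
apply: (@leq_trans (\sum_(k : (grid_vertex n * grid_vertex n)%type) (grid_adj k.1 k.2 : nat))).
  rewrite [X in (X <= _)%N]big_mkcond /=; apply: leq_sum => l _.
  by rewrite /gedge; case: (grid_adj _ _); case: (grid_lt _ _).
rewrite pair_sum.
apply: (@leq_trans (\sum_(a : grid_vertex n) 4)).
  by apply: leq_sum => a _; exact: deg_le4.
by rewrite sum_nat_const card_prod card_ord mulnC.
Qed.

Lemma no_edge n (k : (grid_vertex n * grid_vertex n)%type) : (n <= 1)%N -> gedge k = false.
Proof.
move=> n1; case: k => [[[a ha] [b hb]] [[c hc] [e he]]].
rewrite /gedge /grid_adj /=.
have ? : a = 0%N by lia.
have ? : b = 0%N by lia.
have ? : c = 0%N by lia.
have ? : e = 0%N by lia.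
by subst.
Qed.

Lemma count_pairs n :
  (\sum_(k | gedge k) \sum_(l | gedge l) (@gshare n k l : nat)
     <= 128 * (n * (n - 1)))%N.
Proof.
have [n1|n2] := leqP n 1.
  by rewrite big_pred0 // => k; exact: no_edge.
apply: (@leq_trans (\sum_(k | @gedge n k) 16)).
  by apply: leq_sum => k _; exact: share_le16.
have -> : \sum_(k | @gedge n k) 16 = 16 * \sum_(k | @gedge n k) 1.
  by rewrite big_distrr /=; apply: eq_bigr => k _; rewrite muln1.
have := edges_le n; set s := \sum_(k | _) 1; nia.
Qed.

Local Open Scope ring_scope.
Local Open Scope classical_set_scope.

Section gauss.
Context {R : realType}.
Notation mu := (@lebesgue_measure R).

Lemma sq_exp_le (x : R) : x ^+ 2 * expR (- x ^+ 2 / 2) <= 4 * expR (- x ^+ 2 / 4).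
Proof.
set y := x ^+ 2 / 4.
have hx : x ^+ 2 = 4 * y by rewrite /y mulrC divfK ?pnatr_eq0.
have h2 : - x ^+ 2 / 2 = - y + - y.
  by rewrite hx; lra.
rewrite h2 expRD hx -mulrA ler_pM2l ?ltr0n //.
have -> : - (4 * y) / 4 = - y by lra.
rewrite mulrA ler_piMl ?expR_ge0 //.
have y0 : 0 <= y by rewrite /y divr_ge0 ?sqr_ge0.
have hy : y <= expR y by apply: le_trans (expR_ge1Dx y); lra.
rewrite expRN (le_trans (ler_wpM2r _ hy)) ?invr_ge0 ?expR_ge0 //.
by rewrite mulfV ?gt_eqF ?expR_gt0.
Qed.

Definition gK : R := fine (\int[mu]_x (x ^+ 2 * normal_pdf 0 1 x)%:E)%E.

Lemma gK_fin : (\int[mu]_x (x ^+ 2 * normal_pdf 0 1 x)%:E < +oo)%E.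
Proof.
set s : R := Num.sqrt 2.
have s2 : s ^+ 2 = 2 by rewrite sqr_sqrtr // ler0n.
have s0 : s != 0 by rewrite sqrtr_eq0 -ltNge ltr0n.
set M := 4 * normal_peak (1 : R) / normal_peak s.
have pk0 : 0 < normal_peak s by exact: normal_peak_gt0.
apply: (@le_lt_trans _ _ (\int[mu]_x (M * normal_pdf 0 s x)%:E)%E).
  apply: ge0_le_integral => //.
  - by move=> x _; rewrite lee_fin mulr_ge0 ?sqr_ge0 ?normal_pdf_ge0.
  - apply/measurable_EFinP; apply: measurable_funM; last exact: measurable_normal_pdf.
    exact: measurable_funX.
  - by apply/measurable_EFinP; apply: measurable_funM => //; exact: measurable_normal_pdf.
  move=> x _; rewrite lee_fin /normal_pdf oner_eq0 (negbTE s0) /normal_fun subr0 s2.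
  rewrite /M expr1n.
  have -> : (2 *+ 2 : R) = 4 by rewrite -mulr_natr; lra.
  have -> : 4 * normal_peak 1 / normal_peak s * (normal_peak s * expR (- x ^+ 2 / 4))
     = normal_peak 1 * (4 * expR (- x ^+ 2 / 4)).
    by field; rewrite gt_eqF.
  rewrite mulrCA ler_pM2l; last exact: normal_peak_gt0.
  exact: sq_exp_le.
under eq_integral do rewrite EFinM.
rewrite integralZl //=; last first.
  apply/integrableP; split; first by apply/measurable_EFinP; exact: measurable_normal_pdf.
  under eq_integral do rewrite gee0_abs ?lee_fin ?normal_pdf_ge0 //.
  by rewrite integral_normal_pdf ltry.
by rewrite integral_normal_pdf mule1 ltry.
Qed.

Lemma normal_change (f : R -> \bar R) : measurable_fun setT f -> (forall x, 0 <= f x)%E ->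
  (\int[normal_prob 0 1]_x f x = \int[mu]_x (f x * (normal_pdf 0 1 x)%:E))%E.
Proof.
move=> mf f0.
have numu : (normal_prob (0:R) 1) `<< mu by exact: normal_prob_dominates.
rewrite -(Radon_Nikodym_SigmaFinite.change_of_variables numu) //.
apply: ae_eq_integral => //.
- apply: emeasurable_funM => //.
  exact: measurable_int (Radon_Nikodym_SigmaFinite.f_integrable numu).
- by apply: emeasurable_funM => //; apply/measurable_EFinP; exact: measurable_normal_pdf.
apply: ae_eqe_mul2l.
apply: integral_ae_eq => //.
- exact: Radon_Nikodym_SigmaFinite.f_integrable numu.
- by apply/measurable_EFinP; exact: measurable_normal_pdf.
move=> E _ mE.
by rewrite -Radon_Nikodym_SigmaFinite.f_integral.
Qed.
End gauss.
Section transfer.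
Context {R : realType} {d} {T : measurableType d} (P : probability T R).

Lemma std_normal_int (X : T -> R) (f : measurableTypeR R -> \bar R) :
  measurable_fun setT X -> std_normal_rv P X ->
  measurable_fun setT f -> (forall x, 0 <= f x)%E ->
  (\int[P]_w f (X w) = \int[normal_prob 0 1]_x f x)%E.
Proof.
move=> mX hX mf f0.
pose X' : T -> measurableTypeR R := X.
have mX' : measurable_fun setT X'.
  move=> _ A mA; exact: (mX measurableT A mA).
have := ge0_integral_pushforward mX' P measurableT mf (fun y _ => f0 y).
rewrite preimage_setT => <-.
apply: eq_measure_integral => A mA _.
rewrite /pushforward.
exact: (hX A mA).
Qed.


Lemma Lfun2_sq (f : T -> R) : measurable_fun setT f ->
  (\int[P]_x (f x ^+ 2)%:E < +oo)%E -> f \in Lfun P 2%:E.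
Proof.
move=> mf fin; rewrite inE; apply/andP; split; first by rewrite inE.
rewrite inE /= /finite_norm.
apply: (@lty_poweRy _ _ 2) => //.
rewrite powR_Lnorm //.
rewrite (eq_integral (fun x => (f x ^+ 2)%:E)) // => x _.
rewrite /=.
by rewrite powR_mulrn ?normr_ge0 // real_normK ?num_real.
Qed.

Lemma std_normal_sq (X : T -> R) : measurable_fun setT X -> std_normal_rv P X ->
  (\int[P]_w ((X w) ^+ 2)%:E = gK%:E)%E.
Proof.
move=> mX hX.
have := @std_normal_int X (fun x : measurableTypeR R => (x ^+ 2)%:E) mX hX.
move=> -> //; last first.
- by move=> x; rewrite lee_fin sqr_ge0.
- by apply/measurable_EFinP; exact: measurable_funX.
rewrite normal_change //; last first.
- by move=> x; rewrite lee_fin sqr_ge0.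
- by apply/measurable_EFinP; exact: measurable_funX.
under eq_integral do rewrite -EFinM.
rewrite /gK fineK // ge0_fin_numE ?gK_fin //.
by apply: integral_ge0 => x _; rewrite lee_fin mulr_ge0 ?sqr_ge0 ?normal_pdf_ge0.
Qed.

Lemma gK_ge0 : 0 <= (gK : R).
Proof.
rewrite /gK fine_ge0 //.
by apply: integral_ge0 => x _; rewrite lee_fin mulr_ge0 ?sqr_ge0 ?normal_pdf_ge0.
Qed.

Lemma std_normal_L2 (X : T -> R) : measurable_fun setT X -> std_normal_rv P X ->
  X \in Lfun P 2%:E.
Proof.
by move=> mX hX; apply: Lfun2_sq => //; rewrite std_normal_sq // ltry.
Qed.

End transfer.

Section indep.
Context {R : realType} {d} {T : measurableType d} (P : probability T R)
  (I : finType) (Z : I -> T -> R).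
Hypothesis mZ : forall i, measurable_fun setT (Z i).
Hypothesis hind : mutually_independent P Z.

Local Open Scope ereal_scope.

Lemma indep4 (u v w x : I) (Bu Bv Bw Bx : set R) :
  measurable Bu -> measurable Bv -> measurable Bw -> measurable Bx ->
  u != v -> u != w -> u != x -> v != w -> v != x -> w != x ->
  P (Z u @^-1` Bu `&` Z v @^-1` Bv `&` (Z w @^-1` Bw `&` Z x @^-1` Bx)) =
  P (Z u @^-1` Bu) * P (Z v @^-1` Bv) * (P (Z w @^-1` Bw) * P (Z x @^-1` Bx)).
Proof.
move=> mBu mBv mBw mBx uv uw ux vw vx wx.
pose A i := if i == u then Bu else if i == v then Bv else if i == w then Bw
  else if i == x then Bx else setT.
have mA i : measurable (A i) by rewrite /A; repeat case: ifP => //.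
have Au : A u = Bu by rewrite /A eqxx.
have Av : A v = Bv by rewrite /A (ifN_eqC _ _ uv) eqxx.
have Aw : A w = Bw by rewrite /A (ifN_eqC _ _ uw) (ifN_eqC _ _ vw) eqxx.
have Ax : A x = Bx by rewrite /A (ifN_eqC _ _ ux) (ifN_eqC _ _ vx) (ifN_eqC _ _ wx) eqxx.
have := hind mA.
have -> : \bigcap_(i in [set: I]) (Z i @^-1` A i) =
    Z u @^-1` Bu `&` Z v @^-1` Bv `&` (Z w @^-1` Bw `&` Z x @^-1` Bx).
  apply/seteqP; split.
    move=> t /= H.
    have := H u Logic.I; have := H v Logic.I; have := H w Logic.I; have := H x Logic.I.
    by rewrite /= Au Av Aw Ax => ? ? ? ?.
  move=> t [[hu hv] [hw hx]] i _; rewrite /A /=.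
  by repeat case: eqP => [->|_] //.
move=> ->.
rewrite (bigD1 u) //= (bigD1 v) 1?eq_sym //= (bigD1 w) /=; last by rewrite eq_sym uw eq_sym vw.
rewrite (bigD1 x) /=; last by rewrite eq_sym ux eq_sym vx eq_sym wx.
rewrite big1 ?mule1.
  by rewrite Au Av Aw Ax !muleA.
move=> i /andP[/andP[/andP[iu iv] iw] ix].
by rewrite /A (negbTE iu) (negbTE iv) (negbTE iw) (negbTE ix) preimage_setT probability_setT.
Qed.

Lemma indep2 (u v : I) (Bu Bv : set R) :
  measurable Bu -> measurable Bv -> u != v ->
  P (Z u @^-1` Bu `&` Z v @^-1` Bv) = P (Z u @^-1` Bu) * P (Z v @^-1` Bv).
Proof.
move=> mBu mBv uv.
pose A i := if i == u then Bu else if i == v then Bv else setT.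
have mA i : measurable (A i) by rewrite /A; repeat case: ifP => //.
have Au : A u = Bu by rewrite /A eqxx.
have Av : A v = Bv by rewrite /A (ifN_eqC _ _ uv) eqxx.
have := hind mA.
have -> : \bigcap_(i in [set: I]) (Z i @^-1` A i) = Z u @^-1` Bu `&` Z v @^-1` Bv.
  apply/seteqP; split.
    move=> t /= H.
    have := H u Logic.I; have := H v Logic.I.
    by rewrite /= Au Av => ? ?.
  move=> t [hu hv] i _; rewrite /A /=.
  by repeat case: eqP => [->|_] //.
move=> ->.
rewrite (bigD1 u) //= (bigD1 v) 1?eq_sym //=.
rewrite big1 ?mule1.
  by rewrite Au Av.
move=> i /andP[iu iv].
by rewrite /A (negbTE iu) (negbTE iv) preimage_setT probability_setT.
Qed.


Local Close Scope ereal_scope.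
Definition Ep (a b : I) : set (T * measurableTypeR R) :=
  [set z | ((Z a z.1 <= z.2) && (z.2 < Z b z.1)) || ((Z b z.1 <= z.2) && (z.2 < Z a z.1))].
Definition Esec (a b : I) (t : R) : set T := [set w | Ep a b (w, t)].
Definition Rt (a b : I) (t : R) : set T :=
  Z a @^-1` `]-oo, t]%classic `&` Z b @^-1` `]t, +oo[%classic.

Lemma mpre a (B : set R) : measurable B -> measurable (Z a @^-1` B).
Proof. by move=> mB; rewrite -[_ @^-1` _]setTI; exact: mZ. Qed.

Lemma mRt a b t : measurable (Rt a b t).
Proof. by apply: measurableI; apply: mpre; exact: measurable_itv. Qed.

Lemma EsecE a b t : Esec a b t = Rt a b t `|` Rt b a t.
Proof.
apply/seteqP; split => w; rewrite /Esec /Ep /Rt /= !in_itv /= ?andbT.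
  by case/orP => /andP[h1 h2]; [left|right].
by case=> -[h1 h2]; rewrite h1 h2 ?orbT.
Qed.

Lemma mEsec a b t : measurable (Esec a b t).
Proof. by rewrite EsecE; apply: measurableU; exact: mRt. Qed.

Lemma Rt_disj a b c e t s : Rt a b t `&` Rt b a t = set0 ->
  (Rt a b t `&` Rt c e s) `&` (Rt b a t `&` Rt c e s) = set0.
Proof.
move=> h; apply/seteqP; split => // w [[h1 _] [h2 _]].
by rewrite -h; split.
Qed.

Lemma Rt_disj0 a b t : Rt a b t `&` Rt b a t = set0.
Proof.
apply/seteqP; split => // w; rewrite /Rt /= !in_itv /= ?andbT => -[[h1 h2] [h3 h4]].
have := lt_le_trans h2 h3; have := lt_le_trans h4 h1.
by move=> /ltW hh1 hh2; move: (le_lt_trans hh1 hh2); rewrite ltxx.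
Qed.

Local Open Scope ereal_scope.

Lemma indep_E (u v w x : I) t s :
  u != v -> u != w -> u != x -> v != w -> v != x -> w != x ->
  P (Esec u v t `&` Esec w x s) = P (Esec u v t) * P (Esec w x s).
Proof.
move=> uv uw ux vw vx wx.
have m1 := measurable_itv (R:=R).
have RR a b c e : a != b -> a != c -> a != e -> b != c -> b != e -> c != e ->
    P (Rt a b t `&` Rt c e s) = P (Rt a b t) * P (Rt c e s).
  move=> ab ac ae bc be ce.
  rewrite /Rt indep4 // indep2 // indep2 //.
have disj (A B X Y : set T) : A `<=` X -> B `<=` Y -> X `&` Y = set0 -> A `&` B = set0.
  move=> AX BY XY; apply/seteqP; split => // z [/AX h1 /BY h2].
  by rewrite -XY.
have mR a b c e tt ss : measurable (Rt a b tt `&` Rt c e ss) by apply: measurableI; exact: mRt.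
have PU (A B : set T) : measurable A -> measurable B -> A `&` B = set0 ->
    P (A `|` B) = P A + P B.
  by move=> mA mB AB; rewrite measureU.
rewrite !EsecE setIUl !setIUr.
rewrite PU; last 3 first.
- by apply: measurableU; apply: mR.
- by apply: measurableU; apply: mR.
- by apply: (disj _ _ (Rt u v t) (Rt v u t)) => [z [[]|[]]|z [[]|[]]|] //; exact: Rt_disj0.
rewrite PU; last 3 first.
- exact: mR. - exact: mR.
- by apply: (disj _ _ (Rt w x s) (Rt x w s)) => [z []|z []|] //; exact: Rt_disj0.
rewrite PU; last 3 first.
- exact: mR. - exact: mR.
- by apply: (disj _ _ (Rt w x s) (Rt x w s)) => [z []|z []|] //; exact: Rt_disj0.
rewrite PU; last 3 first.
- exact: mRt. - exact: mRt.
- exact: Rt_disj0.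
rewrite PU; last 3 first.
- exact: mRt. - exact: mRt.
- exact: Rt_disj0.
have vu : v != u by rewrite eq_sym.
have xw : x != w by rewrite eq_sym.
rewrite (RR u v w x) // (RR u v x w) // (RR v u w x) // (RR v u x w) //.
rewrite ge0_muleDl ?adde_ge0 ?measure_ge0 //.
by rewrite !ge0_muleDr ?measure_ge0.
Qed.


Local Close Scope ereal_scope.
Notation RL := (measurableTypeR R).

Lemma mfun_RL d' (X : measurableType d') (f : X -> RL) :
  measurable_fun setT f -> measurable_fun setT (f : X -> R).
Proof. by move=> mf mD B mB; exact: mf mD B mB. Qed.

Lemma mfst a : measurable_fun setT (fun z : T * RL => Z a z.1).
Proof. exact: measurableT_comp (mZ a) measurable_fst. Qed.

Lemma msnd : measurable_fun setT (fun z : T * RL => (z.2 : R)).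
Proof. exact: (mfun_RL measurable_snd). Qed.

Lemma mS a b : measurable [set z : T * RL | (Z a z.1 <= z.2) && (z.2 < Z b z.1)].
Proof.
have -> : [set z : T * RL | (Z a z.1 <= z.2) && (z.2 < Z b z.1)] =
   (fun z : T * RL => (z.2 : R) - Z a z.1) @^-1` `[0, +oo[%classic `&`
   (fun z : T * RL => Z b z.1 - (z.2 : R)) @^-1` `]0, +oo[%classic.
  apply/seteqP; split => z; rewrite /= !in_itv /= ?andbT ?subr_ge0 ?subr_gt0 //.
  by move/andP.
  by move=> [-> ->].
apply: measurableI.
  rewrite -[X in measurable X]setTI; apply: measurable_funB; [exact: msnd|exact: mfst|done|].
  exact: measurable_itv.
rewrite -[X in measurable X]setTI; apply: measurable_funB; [exact: mfst|exact: msnd|done|].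
exact: measurable_itv.
Qed.

Lemma mEp a b : measurable (Ep a b).
Proof.
have -> : Ep a b = [set z : T * RL | (Z a z.1 <= z.2) && (z.2 < Z b z.1)] `|`
                   [set z : T * RL | (Z b z.1 <= z.2) && (z.2 < Z a z.1)].
  by apply/seteqP; split => z; rewrite /Ep /= => /orP.
by apply: measurableU; exact: mS.
Qed.

Lemma absE_int (x y : R) :
  (`|x - y|)%:E = (\int[lebesgue_measure]_t
     (\1_[set t : RL | ((x <= t) && (t < y)) || ((y <= t) && (t < x))] t)%:E)%E.
Proof.
rewrite integral_indic //; last first.
  have -> : [set t : RL | ((x <= t) && (t < y)) || ((y <= t) && (t < x))] =
     `[x, y[%classic `|` `[y, x[%classic.
    by apply/seteqP; split => t; rewrite /= !in_itv /= => /orP.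
  by apply: measurableU; exact: measurable_itv.
rewrite setIT.
case: (ltgtP x y) => [xy|yx|->].
- have -> : [set t : RL | ((x <= t) && (t < y)) || ((y <= t) && (t < x))] = `[x, y[%classic.
    apply/seteqP; split => t; rewrite /= !in_itv /=.
      case/orP => // /andP[h1 h2]; have := le_lt_trans h1 (lt_trans h2 xy).
      by rewrite ltxx.
    by move=> ->.
  have hL := @lebesgue_measure_itv R `[x, y[%R; move: hL; rewrite /= lte_fin xy /= => hL.
  transitivity ((y - x)%:E); first by rewrite distrC ger0_norm ?subr_ge0 ?ltW.
  by rewrite EFinB -hL.
- have -> : [set t : RL | ((x <= t) && (t < y)) || ((y <= t) && (t < x))] = `[y, x[%classic.
    apply/seteqP; split => t; rewrite /= !in_itv /=.
      case/orP => // /andP[h1 h2]; have := le_lt_trans h1 (lt_trans h2 yx).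
      by rewrite ltxx.
    by move=> ->; rewrite orbT.
  have hL := @lebesgue_measure_itv R `[y, x[%R; move: hL; rewrite /= lte_fin yx /= => hL.
  transitivity ((x - y)%:E); first by rewrite ger0_norm ?subr_ge0 ?ltW.
  by rewrite EFinB -hL.
- have -> : [set t : RL | ((y <= t) && (t < y)) || ((y <= t) && (t < y))] = set0.
    apply/seteqP; split => t //=; rewrite orbb => /andP[h1 h2].
    by have := le_lt_trans h1 h2; rewrite ltxx.
  by rewrite measure0 subrr normr0.
Qed.

Lemma Ysec a b w : (`|Z a w - Z b w|)%:E =
  (\int[lebesgue_measure]_t (\1_(Ep a b) (w, t) : R)%:E)%E.
Proof. by rewrite absE_int. Qed.

Lemma mtsec a b w : measurable [set t : RL | Ep a b (w, t)].
Proof.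
have -> : [set t : RL | Ep a b (w, t)] =
   `[Z a w, Z b w[%classic `|` `[Z b w, Z a w[%classic.
  by apply/seteqP; split => t; rewrite /Ep /= !in_itv /= => /orP.
by apply: measurableU; exact: measurable_itv.
Qed.

Lemma mg a b : measurable_fun setT (fun z : T * RL => (\1_(Ep a b) z : R)%:E).
Proof. by apply/measurable_EFinP; apply: measurable_indic; exact: mEp. Qed.

Lemma g0 a b (z : T * RL) : (0 <= (\1_(Ep a b) z : R)%:E)%E.
Proof. by rewrite lee_fin indicE ler0n. Qed.

Lemma sec_int a b t : (\int[P]_w (\1_(Ep a b) (w, t) : R)%:E = P (Esec a b t))%E.
Proof.
transitivity (\int[P]_w (\1_(Esec a b t) w : R)%:E)%E; first by [].
by rewrite integral_indic ?setIT //; exact: mEsec.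
Qed.

Lemma EY a b : (\int[P]_w (`|Z a w - Z b w|)%:E =
   \int[lebesgue_measure]_t P (Esec a b t))%E.
Proof.
under eq_integral do rewrite Ysec.
have := fubini_tonelli (m1:=P) (m2:=@lebesgue_measure R) _ (mg a b) (@g0 a b).
move=> /= ->.
by apply: eq_integral => t _; exact: sec_int.
Qed.

Lemma mPE a b : measurable_fun setT (fun t : RL => P (Esec a b t)).
Proof.
have := measurable_fun_fubini_tonelli_G (m1:=P) _ (mg a b) (@g0 a b).
by rewrite /fubini_G; under eq_fun do rewrite sec_int.
Qed.

Lemma mY a b : measurable_fun setT (fun w => `|Z a w - Z b w|).
Proof. by apply: measurableT_comp => //; apply: measurable_funB; exact: mZ. Qed.

Lemma EYY a b c e : (\int[P]_w (`|Z a w - Z b w| * `|Z c w - Z e w|)%:E =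
   \int[lebesgue_measure]_t \int[lebesgue_measure]_s P (Esec a b t `&` Esec c e s))%E.
Proof.
have H1 w : ((`|Z a w - Z b w| * `|Z c w - Z e w|)%:E =
    \int[lebesgue_measure]_t ((\1_(Ep a b) (w, t) : R)%:E * (`|Z c w - Z e w|)%:E))%E.
  rewrite EFinM (Ysec a b) -ge0_integralZr ?lee_fin //.
  apply/measurable_EFinP; apply: measurable_indic; exact: mtsec.
under eq_integral do rewrite H1.
have := fubini_tonelli (m1:=P) (m2:=@lebesgue_measure R)
   (fun z => ((\1_(Ep a b) z : R)%:E * (`|Z c z.1 - Z e z.1|)%:E)%E).
move=> /= ->; first last.
- by move=> z; rewrite mule_ge0 ?g0 ?lee_fin.
- apply: emeasurable_funM; first exact: mg.
  apply/measurable_EFinP; exact: measurableT_comp (mY c e) measurable_fst.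
apply: eq_integral => t _.
have H2 w : ((\1_(Ep a b) (w, t) : R)%:E * (`|Z c w - Z e w|)%:E =
    \int[lebesgue_measure]_s ((\1_(Ep a b) (w, t) : R)%:E * (\1_(Ep c e) (w, s) : R)%:E))%E.
  rewrite (Ysec c e) -ge0_integralZl ?g0 //.
  apply/measurable_EFinP; apply: measurable_indic; exact: mtsec.
under eq_integral do rewrite H2.
have := fubini_tonelli (m1:=P) (m2:=@lebesgue_measure R)
   (fun z => ((\1_(Esec a b t) z.1 : R)%:E * (\1_(Ep c e) z : R)%:E)%E).
move=> /= ->; first last.
- by move=> z; rewrite mule_ge0 ?g0 ?lee_fin.
- apply: emeasurable_funM; last exact: mg.
  apply/measurable_EFinP; apply: measurableT_comp measurable_fst.
  apply: measurable_indic; exact: mEsec.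
apply: eq_integral => s _.
transitivity (\int[P]_w (\1_(Esec a b t `&` Esec c e s) w : R)%:E)%E.
  by apply: eq_integral => w _; rewrite indicI /= EFinM.
by rewrite integral_indic ?setIT //; apply: measurableI; exact: mEsec.
Qed.

Lemma EYY_indep u v w x :
  u != v -> u != w -> u != x -> v != w -> v != x -> w != x ->
  (\int[P]_t (`|Z u t - Z v t| * `|Z w t - Z x t|)%:E =
   (\int[P]_t (`|Z u t - Z v t|)%:E) * (\int[P]_t (`|Z w t - Z x t|)%:E))%E.
Proof.
move=> uv uw ux vw vx wx.
rewrite EYY EY.
have H t : (\int[lebesgue_measure]_s P (Esec u v t `&` Esec w x s) =
    P (Esec u v t) * \int[P]_t0 (`|Z w t0 - Z x t0|)%:E)%E.
  under eq_integral do rewrite indep_E //.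
  rewrite ge0_integralZl ?EY //; exact: mPE.
under eq_integral do rewrite H.
rewrite ge0_integralZr //; first exact: mPE.
by apply: integral_ge0 => t _; rewrite lee_fin.
Qed.

End indep.

Section varsum.
Context {R : realType} {d} {T : measurableType d} (P : probability T R).

Lemma sum_fun_cons (J : Type) (j : J) (r : seq J) (Pr : pred J) (F : J -> T -> R) :
  (fun t => \sum_(i <- j :: r | Pr i) F i t) =
  if Pr j then (F j \+ (fun t => \sum_(i <- r | Pr i) F i t)) else
    (fun t => \sum_(i <- r | Pr i) F i t).
Proof. by apply/funext => t; rewrite big_cons; case: ifP. Qed.

Lemma sum_fun_nil (J : Type) (Pr : pred J) (F : J -> T -> R) :
  (fun t => \sum_(i <- [::] | Pr i) F i t) = cst 0.
Proof. by apply/funext => t; rewrite big_nil. Qed.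

Lemma sum_L2 (J : Type) (r : seq J) (Pr : pred J) (F : J -> T -> R) :
  (forall j, Pr j -> F j \in Lfun P 2%:E) ->
  (fun t => \sum_(j <- r | Pr j) F j t) \in Lfun P 2%:E.
Proof.
move=> hF; elim: r => [|j r IH]; first by rewrite sum_fun_nil; exact: Lfun_cst.
rewrite sum_fun_cons; case: ifP => // Pj.
apply: rpredD => //; first exact: lee1n.
by move=> ?; exact: hF.
Qed.

Lemma cov_sumr X (J : Type) (r : seq J) (Pr : pred J) (F : J -> T -> R) :
  X \in Lfun P 2%:E -> (forall j, Pr j -> F j \in Lfun P 2%:E) ->
  covariance P X (fun t => \sum_(j <- r | Pr j) F j t) =
  (\sum_(j <- r | Pr j) covariance P X (F j))%E.
Proof.
move=> hX hF; elim: r => [|j r IH].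
  by rewrite sum_fun_nil covariance_cst_r big_nil.
rewrite sum_fun_cons big_cons; case: ifP => // Pj.
by rewrite covarianceDr ?hF ?IH // sum_L2.
Qed.

Lemma cov_suml X (J : Type) (r : seq J) (Pr : pred J) (F : J -> T -> R) :
  X \in Lfun P 2%:E -> (forall j, Pr j -> F j \in Lfun P 2%:E) ->
  covariance P (fun t => \sum_(j <- r | Pr j) F j t) X =
  (\sum_(j <- r | Pr j) covariance P (F j) X)%E.
Proof.
move=> hX hF; rewrite covarianceC cov_sumr //.
by apply: eq_bigr => j _; rewrite covarianceC.
Qed.

Lemma Lfun_normr (f : T -> R) : f \in Lfun P 2%:E -> (fun t => `|f t|) \in Lfun P 2%:E.
Proof.
case/andP; rewrite !inE/= => mf finf; apply/andP; split.
  by rewrite inE/=; exact: measurableT_comp.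
rewrite inE/=/finite_norm.
under [X in ('N[_]__[X])%E]eq_fun => x do rewrite -abse_EFin.
by rewrite Lnorm_abse.
Qed.

End varsum.


Section grid.
Context {R : realType} (n : nat) {d} {T : measurableType d} (P : probability T R)
  (Z : grid_vertex n -> T -> R).
Hypothesis mZ : forall u, measurable_fun setT (Z u).
Hypothesis hind : mutually_independent P Z.
Hypothesis hN : forall u, std_normal_rv P (Z u).

Definition Yp (p : (grid_vertex n * grid_vertex n)%type) := fun t => `|Z p.1 t - Z p.2 t|.

Lemma TV_sum : (fun t => TV (fun u => Z u t)) = (fun t => \sum_(p | gedge p) Yp p t).
Proof.
apply/funext => t; rewrite /TV pair_big_dep.
by apply: eq_bigl => p.
Qed.

Lemma Z_L2 u : Z u \in Lfun P 2%:E.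
Proof. exact: std_normal_L2. Qed.

Lemma Y_L2 p : Yp p \in Lfun P 2%:E.
Proof.
apply: Lfun_normr.
apply: rpredB; first exact: lee1n.
all: by move=> ?; exact: Z_L2.
Qed.

Lemma Y_sq p : (\int[P]_t ((Yp p t) ^+ 2)%:E <= (4 * gK)%:E)%E.
Proof.
apply: (@le_trans _ _ (\int[P]_t ((2 * Z p.1 t ^+ 2)%:E + (2 * Z p.2 t ^+ 2)%:E))%E).
  apply: ge0_le_integral => //.
  - by move=> t _; rewrite lee_fin sqr_ge0.
  - apply/measurable_EFinP; apply: measurable_funX.
    by apply: measurableT_comp => //; apply: measurable_funB.
  - by apply: emeasurable_funD; apply/measurable_EFinP; apply: measurable_funM => //;
      apply: measurable_funX.
  move=> t _; rewrite -EFinD lee_fin /Yp real_normK ?num_real //.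
  set a := Z p.1 t; set b := Z p.2 t.
  have : 0 <= (a + b) ^+ 2 by exact: sqr_ge0.
  by rewrite !sqrrD sqrrN; lra.
rewrite ge0_integralD //; last 4 first.
- by move=> t _; rewrite lee_fin mulr_ge0 ?sqr_ge0.
- by apply/measurable_EFinP; apply: measurable_funM => //; apply: measurable_funX.
- by move=> t _; rewrite lee_fin mulr_ge0 ?sqr_ge0.
- by apply/measurable_EFinP; apply: measurable_funM => //; apply: measurable_funX.
under eq_integral do rewrite EFinM.
under [X in (_ + X)%E]eq_integral do rewrite EFinM.
rewrite !ge0_integralZl_EFin //; last 4 first.
- by move=> t _; rewrite lee_fin sqr_ge0.
- by apply/measurable_EFinP; apply: measurable_funX.
- by move=> t _; rewrite lee_fin sqr_ge0.
- by apply/measurable_EFinP; apply: measurable_funX.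
rewrite !std_normal_sq // -!EFinM -EFinD lee_fin.
lra.
Qed.

Lemma Y_L1 p : Yp p \in Lfun P 1.
Proof. by apply: Lfun_subset12 (Y_L2 p); exact: fin_num_measure. Qed.

Lemma var_Y p : ('V_P[Yp p] <= (4 * gK)%:E)%E.
Proof.
rewrite varianceE ?Y_L2 //.
have fin : ('E_P[Yp p])%E \is a fin_num by exact: expectation_fin_num (Y_L1 p).
rewrite leeBlDr ?fin_numX //.
apply: lee_paddr; first exact: sqre_ge0.
apply: le_trans (Y_sq p).
by rewrite unlock.
Qed.

Lemma adj_neq (u v : grid_vertex n) : grid_adj u v -> u != v.
Proof. by apply: contraTneq => ->; rewrite /grid_adj !distnn. Qed.

Lemma cov_bound p q : gedge p -> gedge q ->
  (covariance P (Yp p) (Yp q) <= ((gshare p q)%:R * (4 * gK))%:E)%E.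
Proof.
move=> ep eq; case sh: (gshare p q).
  rewrite mul1r; apply: le_trans (covariance_le (Y_L2 p) (Y_L2 q)) _.
  have h r : (sqrte 'V_P[Yp r] <= sqrte (4 * gK)%:E)%E.
    by rewrite lee_sqrt ?var_Y // lee_fin mulr_ge0 ?gK_ge0.
  apply: le_trans (lee_pmul (sqrte_ge0 _) (sqrte_ge0 _) (h p) (h q)) _.
  by rewrite -expe2 sqr_sqrte // lee_fin mulr_ge0 ?gK_ge0.
rewrite mul0r.
move: sh; rewrite /gshare => /norP[h11 /norP[h12 /norP[h21 h22]]].
have hp := adj_neq (andP ep).1; have hq := adj_neq (andP eq).1.
rewrite covarianceE ?Y_L1 //; last by apply: Lfun2_mul_Lfun1; exact: Y_L2.
have E1 r : ('E_P[Yp r] = \int[P]_w (Yp r w)%:E)%E by rewrite unlock.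
have E2 : ('E_P[Yp p * Yp q] = \int[P]_w (Yp p w * Yp q w)%:E)%E by rewrite unlock.
rewrite E2 {1}/Yp (@EYY_indep R d T P _ Z mZ hind) // -!E1.
by rewrite subee // fin_numM // expectation_fin_num // Y_L1.
Qed.

Lemma var_TV : ('V_P[fun t => TV (fun u => Z u t)] <=
   (512 * gK * (n * (n - 1))%:R)%:E)%E.
Proof.
rewrite TV_sum /variance.
rewrite cov_suml; last 2 first.
- by apply: sum_L2 => q _; exact: Y_L2.
- by move=> p _; exact: Y_L2.
under eq_bigr => p _.
  rewrite cov_sumr; last 2 first.
  - exact: Y_L2.
  - by move=> q _; exact: Y_L2.
  over.
apply: (@le_trans _ _ (\sum_(p | gedge p) \sum_(q | gedge q)
    ((gshare p q)%:R * (4 * gK))%:E)%E).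
  apply: lee_sum => p ep; apply: lee_sum => q eq; exact: cov_bound.
under eq_bigr do rewrite sumEFin.
rewrite sumEFin lee_fin.
under eq_bigr do rewrite -big_distrl /=.
rewrite -big_distrl /=.
under eq_bigr do rewrite -natr_sum.
rewrite -natr_sum.
have hc := count_pairs n.
have hK := gK_ge0 (R:=R).
rewrite [leRHS](_ : _ = (128 * (n * (n - 1)))%:R * (4 * gK)); last first.
  by rewrite natrM; ring.
apply: ler_wpM2r; first by rewrite mulr_ge0.
by rewrite ler_nat.
Qed.

End grid.

Theorem lemma6p4 (R : realType) :
  exists C : R, 0 < C /\
  forall (n : nat) (d : measure_display) (T : measurableType d)
    (P : probability T R) (Z : grid_vertex n -> T -> R),
    (forall u, measurable_fun setT (Z u)) ->
    mutually_independent P Z ->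
    (forall u, std_normal_rv P (Z u)) ->
    ('V_P[fun t => TV (fun u => Z u t)] <= (C * (n * (n - 1))%:R)%:E)%E.
Proof.
have hK := gK_ge0 (R:=R).
exists (512 * gK + 1); split; first lra.
move=> n d T P Z mZ hind hN.
apply: le_trans (var_TV mZ hind hN) _.
rewrite lee_fin ler_wpM2r ?ler0n //; lra.
Qed.
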